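(* For each $X\in\{\mathrm{B_{ii}},\mathrm{B_{vi}},\mathrm{H_{ii}},\mathrm{H_{iii}}\}$, let $G_X$ be the group with generators $a,b,c$ and relations $\mathrm{B_{ii}}$: $ababab=bababa,\ bc=ab,\ ac=ca$; $\mathrm{B_{vi}}$: $aba=bab,\ aca=bac,\ acaca=cacac$; $\mathrm{H_{ii}}$: $abab=baba,\ aca=bac,\ acaca=cacac$; $\mathrm{H_{iii}}$: $aba=bab,\ bcba=cbac,\ cba=acb$; and let $G_X^+$ be the submonoid generated by $a,b,c$. If $\Delta\in G_X^+$ is quasi-central with associated permutation $\sigma$ of $\{a,b,c\}$, i.e. $x\Delta=\Delta\sigma(x)$ for all $x\in\{a,b,c\}$, then $\sigma$ is the identity. That is, $\sigma(\mathcal{QZ}(G_X^+))$ consists only of the identity.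
   Context: For a monoid generated by $\{a,b,c\}$ (with no two generators equal, as here), an element $\Delta$ is quasi-central if there is a permutation $\sigma_\Delta$ of $\{a,b,c\}$ with $x\Delta=\Delta\sigma_\Delta(x)$ for all generators $x$; $\mathcal{QZ}$ denotes the set of quasi-central elements. *)

(* Defs.v *)
From Stdlib Require Import List Bool.
Import ListNotations.

Inductive gen := ga | gb | gc.

(* a letter of the free group: generator with a flag (true = inverse) *)
Definition letter := (gen * bool)%type.
Definition word := list letter.

Definition pos (w : list gen) : word := map (fun x => (x, false)) w.

Inductive pres := B_ii | B_vi | H_ii | H_iii.

Definition relations (X : pres) : list (list gen * list gen) :=
  match X with
  | B_ii  => [ ([ga;gb;ga;gb;ga;gb], [gb;ga;gb;ga;gb;ga]);
               ([gb;gc], [ga;gb]);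
               ([ga;gc], [gc;ga]) ]
  | B_vi  => [ ([ga;gb;ga], [gb;ga;gb]);
               ([ga;gc;ga], [gb;ga;gc]);
               ([ga;gc;ga;gc;ga], [gc;ga;gc;ga;gc]) ]
  | H_ii  => [ ([ga;gb;ga;gb], [gb;ga;gb;ga]);
               ([ga;gc;ga], [gb;ga;gc]);
               ([ga;gc;ga;gc;ga], [gc;ga;gc;ga;gc]) ]
  | H_iii => [ ([ga;gb;ga], [gb;ga;gb]);
               ([gb;gc;gb;ga], [gc;gb;ga;gc]);
               ([gc;gb;ga], [ga;gc;gb]) ]
  end.

(* Equality in the group G_X: the congruence on words generated by the
   defining relations and free cancellation. *)
Inductive geq (X : pres) : word -> word -> Prop :=
| geq_rel : forall u v, In (u, v) (relations X) -> geq X (pos u) (pos v)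
| geq_cancel : forall (x : gen) (e : bool), geq X [(x, e); (x, negb e)] []
| geq_refl : forall u, geq X u u
| geq_sym : forall u v, geq X u v -> geq X v u
| geq_trans : forall u v w, geq X u v -> geq X v w -> geq X u w
| geq_cat : forall u u' v v', geq X u u' -> geq X v v' -> geq X (u ++ v) (u' ++ v').

(* Delta (an element of G_X^+, represented by the positive word d) is
   quasi-central with associated permutation sigma. *)
Definition quasi_central_with (X : pres) (d : list gen) (sigma : gen -> gen) : Prop :=
  (forall x y, sigma x = sigma y -> x = y) /\
  (forall x : gen, geq X (pos (x :: d)) (pos (d ++ [sigma x]))).

(* Main.v *)
Require Import Defs.
From Stdlib Require Import List.
Import ListNotations.

Fixpoint ev {T : Type} (lf : letter -> T -> T) (w : word) (i : T) : T :=
  match w with [] => i | l :: w' => ev lf w' (lf l i) end.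

Lemma ev_app {T} (lf : letter -> T -> T) u v i : ev lf (u ++ v) i = ev lf v (ev lf u i).
Proof. revert i; induction u as [|l u IH]; intros i; simpl; auto. Qed.

Lemma inv_geq {T} (X : pres) (lf : letter -> T -> T)
  (hc : forall x e i, lf (x, negb e) (lf (x, e) i) = i)
  (hr : forall u v, In (u, v) (relations X) -> forall i, ev lf (pos u) i = ev lf (pos v) i) :
  forall u v, geq X u v -> forall i, ev lf u i = ev lf v i.
Proof.
  intros u v H; induction H; intros i.
  - apply hr; auto.
  - simpl. apply hc.
  - reflexivity.
  - symmetry; auto.
  - rewrite IHgeq1; auto.
  - rewrite !ev_app, IHgeq1, IHgeq2; reflexivity.
Qed.

Lemma qc_ev {T} (X : pres) (lf : letter -> T -> T)
  (hc : forall x e i, lf (x, negb e) (lf (x, e) i) = i)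
  (hr : forall u v, In (u, v) (relations X) -> forall i, ev lf (pos u) i = ev lf (pos v) i)
  d sigma : quasi_central_with X d sigma ->
  forall x i, ev lf (pos d) (lf (x, false) i) = lf (sigma x, false) (ev lf (pos d) i).
Proof.
  intros [_ H] x i. specialize (inv_geq X lf hc hr _ _ (H x) i).
  unfold pos; rewrite map_app, ev_app. simpl. auto.
Qed.

Ltac propag g :=
  repeat match goal with
  | H : g ?p = ?q, H' : context [g ?p] |- _ =>
      tryif constr_eq H H' then fail else
      lazymatch q with context [g] => fail | _ => rewrite H in H'; simpl in H' end
  | H : ?a = ?a |- _ => clear H
  end.

Inductive pt_B_ii := PBii_0 | PBii_1 | PBii_2 | PBii_3.
Definition f_B_ii_ga (i : pt_B_ii) : pt_B_ii := match i with PBii_0 => PBii_1 | PBii_1 => PBii_0 | PBii_2 => PBii_3 | PBii_3 => PBii_2 end.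
Definition fi_B_ii_ga (i : pt_B_ii) : pt_B_ii := match i with PBii_0 => PBii_1 | PBii_1 => PBii_0 | PBii_2 => PBii_3 | PBii_3 => PBii_2 end.
Definition f_B_ii_gb (i : pt_B_ii) : pt_B_ii := match i with PBii_0 => PBii_0 | PBii_1 => PBii_2 | PBii_2 => PBii_3 | PBii_3 => PBii_1 end.
Definition fi_B_ii_gb (i : pt_B_ii) : pt_B_ii := match i with PBii_0 => PBii_0 | PBii_1 => PBii_3 | PBii_2 => PBii_1 | PBii_3 => PBii_2 end.
Definition f_B_ii_gc (i : pt_B_ii) : pt_B_ii := match i with PBii_0 => PBii_2 | PBii_1 => PBii_3 | PBii_2 => PBii_0 | PBii_3 => PBii_1 end.
Definition fi_B_ii_gc (i : pt_B_ii) : pt_B_ii := match i with PBii_0 => PBii_2 | PBii_1 => PBii_3 | PBii_2 => PBii_0 | PBii_3 => PBii_1 end.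
Definition lf_B_ii (l : letter) : pt_B_ii -> pt_B_ii :=
  match l with
  | (ga, false) => f_B_ii_ga | (ga, true) => fi_B_ii_ga
  | (gb, false) => f_B_ii_gb | (gb, true) => fi_B_ii_gb
  | (gc, false) => f_B_ii_gc | (gc, true) => fi_B_ii_gc end.

Lemma hc_B_ii : forall x e i, lf_B_ii (x, negb e) (lf_B_ii (x, e) i) = i.
Proof. intros [] [] []; reflexivity. Qed.

Lemma hr_B_ii : forall u v, In (u, v) (relations B_ii) -> forall i, ev lf_B_ii (pos u) i = ev lf_B_ii (pos v) i.
Proof.
  intros u v H; simpl in H; destruct H as [H|[H|[H|[]]]]; inversion H; subst; intros []; reflexivity.
Qed.

Lemma main_B_ii d sigma : quasi_central_with B_ii d sigma -> forall x, sigma x = x.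
Proof.
  intros Hq. pose proof (qc_ev B_ii lf_B_ii hc_B_ii hr_B_ii d sigma Hq) as E.
  destruct Hq as [Hinj _].
  set (g := ev lf_B_ii (pos d)) in E. clearbody g.
  assert (Ea := E ga). assert (Eb := E gb). assert (Ec := E gc). clear E.
  destruct (sigma ga) eqn:Sa, (sigma gb) eqn:Sb, (sigma gc) eqn:Sc;
  try (intros []; congruence);
  try (exfalso; match goal with
      | H1 : sigma ?x = ?z, H2 : sigma ?y = ?z |- _ =>
        assert (x = y) by (apply Hinj; congruence); discriminate end);
  exfalso; simpl in Ea, Eb, Ec;
  pose proof (Ea PBii_0); pose proof (Eb PBii_0); pose proof (Ec PBii_0); pose proof (Ea PBii_1); pose proof (Eb PBii_1); pose proof (Ec PBii_1); pose proof (Ea PBii_2); pose proof (Eb PBii_2); pose proof (Ec PBii_2); pose proof (Ea PBii_3); pose proof (Eb PBii_3); pose proof (Ec PBii_3);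
  clear Ea Eb Ec; simpl in *;
  destruct (g PBii_0) eqn:G0; propag g; discriminate.
Qed.

Inductive pt_B_vi := PBvi_0 | PBvi_1 | PBvi_2 | PBvi_3 | PBvi_4.
Definition f_B_vi_ga (i : pt_B_vi) : pt_B_vi := match i with PBvi_0 => PBvi_1 | PBvi_1 => PBvi_2 | PBvi_2 => PBvi_3 | PBvi_3 => PBvi_4 | PBvi_4 => PBvi_0 end.
Definition fi_B_vi_ga (i : pt_B_vi) : pt_B_vi := match i with PBvi_0 => PBvi_4 | PBvi_1 => PBvi_0 | PBvi_2 => PBvi_1 | PBvi_3 => PBvi_2 | PBvi_4 => PBvi_3 end.
Definition f_B_vi_gb (i : pt_B_vi) : pt_B_vi := match i with PBvi_0 => PBvi_2 | PBvi_1 => PBvi_0 | PBvi_2 => PBvi_4 | PBvi_3 => PBvi_1 | PBvi_4 => PBvi_3 end.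
Definition fi_B_vi_gb (i : pt_B_vi) : pt_B_vi := match i with PBvi_0 => PBvi_1 | PBvi_1 => PBvi_3 | PBvi_2 => PBvi_0 | PBvi_3 => PBvi_4 | PBvi_4 => PBvi_2 end.
Definition f_B_vi_gc (i : pt_B_vi) : pt_B_vi := match i with PBvi_0 => PBvi_1 | PBvi_1 => PBvi_4 | PBvi_2 => PBvi_3 | PBvi_3 => PBvi_0 | PBvi_4 => PBvi_2 end.
Definition fi_B_vi_gc (i : pt_B_vi) : pt_B_vi := match i with PBvi_0 => PBvi_3 | PBvi_1 => PBvi_0 | PBvi_2 => PBvi_4 | PBvi_3 => PBvi_2 | PBvi_4 => PBvi_1 end.
Definition lf_B_vi (l : letter) : pt_B_vi -> pt_B_vi :=
  match l with
  | (ga, false) => f_B_vi_ga | (ga, true) => fi_B_vi_ga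
  | (gb, false) => f_B_vi_gb | (gb, true) => fi_B_vi_gb
  | (gc, false) => f_B_vi_gc | (gc, true) => fi_B_vi_gc end.

Lemma hc_B_vi : forall x e i, lf_B_vi (x, negb e) (lf_B_vi (x, e) i) = i.
Proof. intros [] [] []; reflexivity. Qed.

Lemma hr_B_vi : forall u v, In (u, v) (relations B_vi) -> forall i, ev lf_B_vi (pos u) i = ev lf_B_vi (pos v) i.
Proof.
  intros u v H; simpl in H; destruct H as [H|[H|[H|[]]]]; inversion H; subst; intros []; reflexivity.
Qed.

Lemma main_B_vi d sigma : quasi_central_with B_vi d sigma -> forall x, sigma x = x.
Proof.
  intros Hq. pose proof (qc_ev B_vi lf_B_vi hc_B_vi hr_B_vi d sigma Hq) as E.
  destruct Hq as [Hinj _].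
  set (g := ev lf_B_vi (pos d)) in E. clearbody g.
  assert (Ea := E ga). assert (Eb := E gb). assert (Ec := E gc). clear E.
  destruct (sigma ga) eqn:Sa, (sigma gb) eqn:Sb, (sigma gc) eqn:Sc;
  try (intros []; congruence);
  try (exfalso; match goal with
      | H1 : sigma ?x = ?z, H2 : sigma ?y = ?z |- _ =>
        assert (x = y) by (apply Hinj; congruence); discriminate end);
  exfalso; simpl in Ea, Eb, Ec;
  pose proof (Ea PBvi_0); pose proof (Eb PBvi_0); pose proof (Ec PBvi_0); pose proof (Ea PBvi_1); pose proof (Eb PBvi_1); pose proof (Ec PBvi_1); pose proof (Ea PBvi_2); pose proof (Eb PBvi_2); pose proof (Ec PBvi_2); pose proof (Ea PBvi_3); pose proof (Eb PBvi_3); pose proof (Ec PBvi_3); pose proof (Ea PBvi_4); pose proof (Eb PBvi_4); pose proof (Ec PBvi_4);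
  clear Ea Eb Ec; simpl in *;
  destruct (g PBvi_0) eqn:G0; propag g; discriminate.
Qed.

Inductive pt_H_ii := PHii_0 | PHii_1 | PHii_2 | PHii_3 | PHii_4.
Definition f_H_ii_ga (i : pt_H_ii) : pt_H_ii := match i with PHii_0 => PHii_0 | PHii_1 => PHii_1 | PHii_2 => PHii_3 | PHii_3 => PHii_4 | PHii_4 => PHii_2 end.
Definition fi_H_ii_ga (i : pt_H_ii) : pt_H_ii := match i with PHii_0 => PHii_0 | PHii_1 => PHii_1 | PHii_2 => PHii_4 | PHii_3 => PHii_2 | PHii_4 => PHii_3 end.
Definition f_H_ii_gb (i : pt_H_ii) : pt_H_ii := match i with PHii_0 => PHii_0 | PHii_1 => PHii_2 | PHii_2 => PHii_3 | PHii_3 => PHii_1 | PHii_4 => PHii_4 end.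
Definition fi_H_ii_gb (i : pt_H_ii) : pt_H_ii := match i with PHii_0 => PHii_0 | PHii_1 => PHii_3 | PHii_2 => PHii_1 | PHii_3 => PHii_2 | PHii_4 => PHii_4 end.
Definition f_H_ii_gc (i : pt_H_ii) : pt_H_ii := match i with PHii_0 => PHii_1 | PHii_1 => PHii_2 | PHii_2 => PHii_0 | PHii_3 => PHii_3 | PHii_4 => PHii_4 end.
Definition fi_H_ii_gc (i : pt_H_ii) : pt_H_ii := match i with PHii_0 => PHii_2 | PHii_1 => PHii_0 | PHii_2 => PHii_1 | PHii_3 => PHii_3 | PHii_4 => PHii_4 end.
Definition lf_H_ii (l : letter) : pt_H_ii -> pt_H_ii :=
  match l with
  | (ga, false) => f_H_ii_ga | (ga, true) => fi_H_ii_ga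
  | (gb, false) => f_H_ii_gb | (gb, true) => fi_H_ii_gb
  | (gc, false) => f_H_ii_gc | (gc, true) => fi_H_ii_gc end.

Lemma hc_H_ii : forall x e i, lf_H_ii (x, negb e) (lf_H_ii (x, e) i) = i.
Proof. intros [] [] []; reflexivity. Qed.

Lemma hr_H_ii : forall u v, In (u, v) (relations H_ii) -> forall i, ev lf_H_ii (pos u) i = ev lf_H_ii (pos v) i.
Proof.
  intros u v H; simpl in H; destruct H as [H|[H|[H|[]]]]; inversion H; subst; intros []; reflexivity.
Qed.

Lemma main_H_ii d sigma : quasi_central_with H_ii d sigma -> forall x, sigma x = x.
Proof.
  intros Hq. pose proof (qc_ev H_ii lf_H_ii hc_H_ii hr_H_ii d sigma Hq) as E.
  destruct Hq as [Hinj _].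
  set (g := ev lf_H_ii (pos d)) in E. clearbody g.
  assert (Ea := E ga). assert (Eb := E gb). assert (Ec := E gc). clear E.
  destruct (sigma ga) eqn:Sa, (sigma gb) eqn:Sb, (sigma gc) eqn:Sc;
  try (intros []; congruence);
  try (exfalso; match goal with
      | H1 : sigma ?x = ?z, H2 : sigma ?y = ?z |- _ =>
        assert (x = y) by (apply Hinj; congruence); discriminate end);
  exfalso; simpl in Ea, Eb, Ec;
  pose proof (Ea PHii_0); pose proof (Eb PHii_0); pose proof (Ec PHii_0); pose proof (Ea PHii_1); pose proof (Eb PHii_1); pose proof (Ec PHii_1); pose proof (Ea PHii_2); pose proof (Eb PHii_2); pose proof (Ec PHii_2); pose proof (Ea PHii_3); pose proof (Eb PHii_3); pose proof (Ec PHii_3); pose proof (Ea PHii_4); pose proof (Eb PHii_4); pose proof (Ec PHii_4);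
  clear Ea Eb Ec; simpl in *;
  destruct (g PHii_0) eqn:G0; propag g; discriminate.
Qed.

Inductive pt_H_iii := PHiii_0 | PHiii_1 | PHiii_2 | PHiii_3 | PHiii_4.
Definition f_H_iii_ga (i : pt_H_iii) : pt_H_iii := match i with PHiii_0 => PHiii_1 | PHiii_1 => PHiii_2 | PHiii_2 => PHiii_3 | PHiii_3 => PHiii_4 | PHiii_4 => PHiii_0 end.
Definition fi_H_iii_ga (i : pt_H_iii) : pt_H_iii := match i with PHiii_0 => PHiii_4 | PHiii_1 => PHiii_0 | PHiii_2 => PHiii_1 | PHiii_3 => PHiii_2 | PHiii_4 => PHiii_3 end.
Definition f_H_iii_gb (i : pt_H_iii) : pt_H_iii := match i with PHiii_0 => PHiii_2 | PHiii_1 => PHiii_0 | PHiii_2 => PHiii_4 | PHiii_3 => PHiii_1 | PHiii_4 => PHiii_3 end.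
Definition fi_H_iii_gb (i : pt_H_iii) : pt_H_iii := match i with PHiii_0 => PHiii_1 | PHiii_1 => PHiii_3 | PHiii_2 => PHiii_0 | PHiii_3 => PHiii_4 | PHiii_4 => PHiii_2 end.
Definition f_H_iii_gc (i : pt_H_iii) : pt_H_iii := match i with PHiii_0 => PHiii_3 | PHiii_1 => PHiii_0 | PHiii_2 => PHiii_4 | PHiii_3 => PHiii_2 | PHiii_4 => PHiii_1 end.
Definition fi_H_iii_gc (i : pt_H_iii) : pt_H_iii := match i with PHiii_0 => PHiii_1 | PHiii_1 => PHiii_4 | PHiii_2 => PHiii_3 | PHiii_3 => PHiii_0 | PHiii_4 => PHiii_2 end.
Definition lf_H_iii (l : letter) : pt_H_iii -> pt_H_iii :=
  match l with
  | (ga, false) => f_H_iii_ga | (ga, true) => fi_H_iii_ga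
  | (gb, false) => f_H_iii_gb | (gb, true) => fi_H_iii_gb
  | (gc, false) => f_H_iii_gc | (gc, true) => fi_H_iii_gc end.

Lemma hc_H_iii : forall x e i, lf_H_iii (x, negb e) (lf_H_iii (x, e) i) = i.
Proof. intros [] [] []; reflexivity. Qed.

Lemma hr_H_iii : forall u v, In (u, v) (relations H_iii) -> forall i, ev lf_H_iii (pos u) i = ev lf_H_iii (pos v) i.
Proof.
  intros u v H; simpl in H; destruct H as [H|[H|[H|[]]]]; inversion H; subst; intros []; reflexivity.
Qed.

Lemma main_H_iii d sigma : quasi_central_with H_iii d sigma -> forall x, sigma x = x.
Proof.
  intros Hq. pose proof (qc_ev H_iii lf_H_iii hc_H_iii hr_H_iii d sigma Hq) as E.
  destruct Hq as [Hinj _].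
  set (g := ev lf_H_iii (pos d)) in E. clearbody g.
  assert (Ea := E ga). assert (Eb := E gb). assert (Ec := E gc). clear E.
  destruct (sigma ga) eqn:Sa, (sigma gb) eqn:Sb, (sigma gc) eqn:Sc;
  try (intros []; congruence);
  try (exfalso; match goal with
      | H1 : sigma ?x = ?z, H2 : sigma ?y = ?z |- _ =>
        assert (x = y) by (apply Hinj; congruence); discriminate end);
  exfalso; simpl in Ea, Eb, Ec;
  pose proof (Ea PHiii_0); pose proof (Eb PHiii_0); pose proof (Ec PHiii_0); pose proof (Ea PHiii_1); pose proof (Eb PHiii_1); pose proof (Ec PHiii_1); pose proof (Ea PHiii_2); pose proof (Eb PHiii_2); pose proof (Ec PHiii_2); pose proof (Ea PHiii_3); pose proof (Eb PHiii_3); pose proof (Ec PHiii_3); pose proof (Ea PHiii_4); pose proof (Eb PHiii_4); pose proof (Ec PHiii_4);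
  clear Ea Eb Ec; simpl in *;
  destruct (g PHiii_0) eqn:G0; propag g; discriminate.
Qed.

Theorem mainTheorem10 :
  forall (X : pres) (d : list gen) (sigma : gen -> gen),
    quasi_central_with X d sigma -> forall x : gen, sigma x = x.
Proof.
  intros [] d sigma H.
  - exact (main_B_ii d sigma H).
  - exact (main_B_vi d sigma H).
  - exact (main_H_ii d sigma H).
  - exact (main_H_iii d sigma H).
Qed.
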